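(* Consider instances with divisible items. There is no (possibly randomized) mechanism $M$ that is individually rational, truthful in expectation and budget feasible in expectation, together with constants $\alpha>1-1/e$ and $\theta_0>0$, such that on every instance with $c_{\max}/B\le\theta_0$ the expected utility of $M$ is at least $\alpha U^\star$.
   Context: A buyer with budget $B>0$ faces a finite set $S$ of sellers; seller $i$ owns one item giving the buyer utility $u_i>0$ and has a private cost $c_i\ge0$; $c_{\max}=\max_i c_i$. Items are divisible: buying a fraction $x_i\in[0,1]$ costs seller $i$ the amount $x_ic_i$ and gives the buyer utility $x_iu_i$. $U^\star=\max\{\sum_iu_i\alpha_i:\alpha\in[0,1]^S,\ \sum_ic_i\alpha_i\le B\}$. A randomized mechanism maps reported costs to random fractions $x_i\in[0,1]$ and random payments $p_i\ge0$; its utility is $\sum_iu_ix_i$. It is truthful in expectation if for every seller $i$ and all reports, $\mathbb E[p_i-c_ix_i]$ is maximized (over $i$'s report, the others' reports fixed) by reporting the true cost $c_i$; individually rational in expectation if $\mathbb E[p_i]\ge c_i\mathbb E[x_i]$ under truthful reports; budget feasible in expectation if $\mathbb E[\sum_ip_i]\le B$. *)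

(* Defs.v *)
From HB Require Import structures.
From mathcomp Require Import all_boot all_order all_algebra.
From mathcomp Require Import all_classical all_reals all_analysis.
Set Implicit Arguments.
Unset Strict Implicit.
Unset Printing Implicit Defensive.
Import Order.TTheory GRing.Theory Num.Theory.
Local Open Scope ring_scope.

(* A randomized mechanism with randomness drawn from a probability space
   (Omega, P): given n, the (public) budget B and utilities u, and the
   reported cost vector, it returns for every random outcome w a pair
   (fractions x, payments p). *)
Definition mechanism (R : realType) (Omega : Type) :=
  forall n : nat, R -> ('I_n -> R) -> ('I_n -> R) -> Omega ->
    ('I_n -> R) * ('I_n -> R).

Section Mech.
Context {R : realType} {d : measure_display} {Omega : measurableType d}.
Variable (P : probability Omega R).

Definition valid_instance n (B : R) (u : 'I_n -> R) :=
  0 < B /\ forall i, 0 < u i.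

Definition nonneg_costs n (c : 'I_n -> R) := forall i, 0 <= c i.

Definition upd n (c : 'I_n -> R) (i : 'I_n) (b : R) : 'I_n -> R :=
  fun j => if j == i then b else c j.

Definition expect (f : Omega -> R) : \bar R := (\int[P]_w (f w)%:E)%E.

Definition alloc (M : mechanism R Omega) n B u c w (i : 'I_n) :=
  (M n B u c w).1 i.
Definition pay (M : mechanism R Omega) n B u c w (i : 'I_n) :=
  (M n B u c w).2 i.

Definition well_formed (M : mechanism R Omega) :=
  forall n B u c, valid_instance B u -> nonneg_costs c -> forall i : 'I_n,
    measurable_fun setT (fun w => alloc M B u c w i) /\
    measurable_fun setT (fun w => pay M B u c w i) /\
    (forall w, 0 <= alloc M B u c w i <= 1 /\ 0 <= pay M B u c w i).

Definition IR_in_expectation (M : mechanism R Omega) :=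
  forall n B u c, valid_instance B u -> nonneg_costs c -> forall i : 'I_n,
    ((c i)%:E * expect (fun w => alloc M B u c w i)
       <= expect (fun w => pay M B u c w i))%E.

Definition truthful_in_expectation (M : mechanism R Omega) :=
  forall n B u c, valid_instance B u -> nonneg_costs c ->
  forall (i : 'I_n) (b : R), 0 <= b ->
    (expect (fun w => (pay M B u (upd c i b) w i
                      - c i * alloc M B u (upd c i b) w i)%R)
     <= expect (fun w => (pay M B u c w i - c i * alloc M B u c w i)%R))%E.

Definition BF_in_expectation (M : mechanism R Omega) :=
  forall n B u c, valid_instance B u -> nonneg_costs c ->
    (expect (fun w => (\sum_(i < n) pay M B u c w i)%R) <= B%:E)%E.

Definition expected_utility (M : mechanism R Omega) n B (u c : 'I_n -> R) :=
  expect (fun w => \sum_(i < n) u i * alloc M B u c w i).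

End Mech.

Definition feasible_frac {R : realType} n (c : 'I_n -> R) (B : R)
  (a : 'I_n -> R) :=
  (forall i, 0 <= a i <= 1) /\ \sum_(i < n) c i * a i <= B.

Definition Ustar {R : realType} n (u c : 'I_n -> R) (B : R) : R :=
  sup [set \sum_(i < n) u i * a i | a in feasible_frac c B].

Definition cmax {R : realType} n (c : 'I_n -> R) : R :=
  \big[Num.max/0]_(i < n) c i.

(* Main.v *)
Require Import Defs.
From HB Require Import structures.
From mathcomp Require Import all_boot all_order all_algebra.
From mathcomp Require Import all_classical all_reals all_analysis.
From mathcomp Require Import ring lra.
Import Order.TTheory GRing.Theory Num.Theory.
Local Open Scope ring_scope.

Section Num.
Context {R : realType}.

Definition lv (s : R) (k : nat) := 1 - s ^+ k.
Definition fv (s : R) (m k : nat) := if k is 0 then s ^+ m else s ^+ (m - k) * (1 - s).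

Lemma fv_ge0 s m k : 0 <= s <= 1 -> 0 <= fv s m k.
Proof.
move=> /andP[s0 s1]; case: k => [|k] /=; first exact: exprn_ge0.
by apply: mulr_ge0; [exact: exprn_ge0 | lra].
Qed.

Lemma lv_01 s k : 0 <= s <= 1 -> 0 <= lv s k <= 1.
Proof.
move=> /andP[s0 s1]; rewrite /lv.
have h1 := exprn_ge0 k s0; have h2 : s ^+ k <= 1 by apply: exprn_ile1.
apply/andP; split; lra.
Qed.

Lemma abel (G U : nat -> R) m :
  \sum_(k < m.+1) (G k - (if (k : nat) is k'.+1 then G k' else 0)) * U k =
  \sum_(k < m) G k * (U k - U k.+1) + G m * U m.
Proof.
elim: m => [|m IH]; first by rewrite big_ord1 big_ord0 /= subr0 add0r.
rewrite big_ord_recr /= IH big_ord_recr /=.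
by rewrite mulrBr mulrBl; lra.
Qed.

Lemma fvG s m (k : 'I_m.+1) :
  fv s m k = s ^+ (m - k) - (if (k : nat) is k'.+1 then s ^+ (m - k') else 0).
Proof.
case: k => [[|k] hk] /=; rewrite ?subr0 ?subn0 //.
have -> : (m - k = (m - k.+1).+1)%N by rewrite subnSK.
by rewrite exprS; lra.
Qed.

Lemma fv_sum s m : \sum_(k < m.+1) fv s m k = 1.
Proof.
rewrite (eq_bigr (fun k : 'I_m.+1 => (s ^+ (m - k) -
   (if (k : nat) is k'.+1 then s ^+ (m - k') else 0)) * 1)); last first.
  by move=> k _; rewrite mulr1 fvG.
rewrite (abel (fun k => s ^+ (m - k)) (fun _ => 1) m).
by rewrite big1 ?add0r ?subnn ?expr0 ?mulr1 // => k _; rewrite subrr mulr0.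
Qed.

Lemma fv_pow s m : \sum_(k < m.+1) fv s m k * s ^+ k = s ^+ m + m%:R * (s ^+ m * (1 - s)).
Proof.
rewrite big_ord_recl /= expr0 mulr1; congr (_ + _).
rewrite (eq_bigr (fun _ => s ^+ m * (1 - s))); last first.
  by move=> k _; rewrite /bump /= add1n mulrAC -exprD subnK // ltn_ord.
by rewrite sumr_const card_ord mulr_natl.
Qed.
Lemma fv_mu s m : \sum_(k < m.+1) fv s m k * lv s k = 1 - s ^+ m - m%:R * (s ^+ m * (1 - s)).
Proof.
under eq_bigr do rewrite /lv mulrBr mulr1.
rewrite sumrB fv_sum fv_pow; lra.
Qed.

Lemma spow_lb (m : nat) : (0 < m)%N ->
  (expR (1 : R))^-1 <= (1 - (m.+1%:R)^-1) ^+ m.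
Proof.
move=> m0.
set s := 1 - _.
have mpos : (0 : R) < m%:R by rewrite ltr0n.
have m1pos : (0 : R) < m.+1%:R by rewrite ltr0n.
pose q := 1 + (m%:R : R)^-1.
have sq : s * q = 1.
  rewrite /s /q; have -> : m.+1%:R = m%:R + 1 :> R by rewrite -natr1.
  field; apply/andP; split; [rewrite gt_eqF // | rewrite gt_eqF //]; lra.
have qe : q ^+ m <= expR 1.
  have -> : (1 : R) = m%:R * (m%:R)^-1 by rewrite mulfV // gt_eqF.
  rewrite expRM_natl; apply: lerXn2r; rewrite ?nnegrE ?expR_ge0 //.
    by rewrite /q; have : 0 <= (m%:R : R)^-1 by rewrite invr_ge0 ltW.
  exact: expR_ge1Dx.
have s0 : 0 <= s by rewrite /s subr_ge0 invf_le1 // ler1n.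
have e1 : (s ^+ m) * q ^+ m = 1 by rewrite -exprMn sq expr1n.
have ep : 0 < expR 1 :> R by exact: expR_gt0.
have : 1 <= s ^+ m * expR 1.
  rewrite -[X in X <= _]e1; apply: ler_wpM2l; [exact: exprn_ge0 | exact: qe].
by move=> h; rewrite -div1r ler_pdivrMr.
Qed.


Lemma ustar_ge n (c : 'I_n -> R) B t : 0 <= t <= 1 -> \sum_i c i * t <= B ->
  n%:R * t <= Ustar (fun _ => 1) c B.
Proof.
move=> t01 hB; rewrite /Ustar.
have hub : has_ubound [set \sum_(i < n) (fun _ : 'I_n => (1 : R)) i * a i | a in feasible_frac c B].
  exists n%:R => x [a [ha _] <-].
  have -> : n%:R = \sum_(i < n) (1 : R) by rewrite sumr_const card_ord.
  by apply: ler_sum => i _; rewrite mul1r; case/andP: (ha i).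
apply: (ub_le_sup hub); exists (fun _ => t); first by split.
by rewrite (eq_bigr (fun _ => t)) ?sumr_const ?card_ord ?mulr_natl // => i _; rewrite mul1r.
Qed.

Lemma ustar_lb n (c : 'I_n -> R) B y : 0 < B -> 0 <= y ->
  \sum_i c i - B <= y -> n%:R - n%:R * y / B <= Ustar (fun _ => 1) c B.
Proof.
move=> B0 y0 hy.
set S := \sum_i c i.
have n0 : (0 : R) <= n%:R by rewrite ler0n.
pose w := y / B.
have yw : y = w * B by rewrite /w divfK // gt_eqF.
have w0 : 0 <= w by rewrite /w divr_ge0 // ltW.
rewrite -/w -/S in hy *.
have -> : n%:R * y / B = n%:R * w by rewrite /w mulrA.
have hsum : forall t, \sum_i c i * t = S * t by move=> t; rewrite /S mulr_suml.
have [SB|SB] := lerP S B.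
  apply: le_trans (@ustar_ge n c B (1) _ _); first by nra.
    by rewrite ler01 lexx.
  by rewrite hsum mulr1.
pose z := S / B.
have zS : S = z * B by rewrite /z divfK // gt_eqF.
have z1 : 1 < z by rewrite /z ltr_pdivlMr // mul1r.
have hw : z - 1 <= w.
  rewrite yw zS in hy; rewrite -subr_ge0.
  have : 0 <= (w - (z - 1)) * B by nra.
  by rewrite pmulr_lge0.
have [z2|z2] := lerP z 2.
  apply: le_trans (@ustar_ge n c B (2 - z) _ _).
  - by nra.
  - by apply/andP; split; lra.
  - by rewrite hsum zS; nra.
apply: le_trans (@ustar_ge n c B (0) _ _).
- by nra.
- by rewrite lexx ler01.
- by rewrite hsum mulr0 ltW.
Qed.

Lemma cmax_le1 n (c : 'I_n -> R) : (forall i, c i <= 1) -> cmax c <= 1.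
Proof.
move=> h; rewrite /cmax; elim/big_ind: _ => //.
  by move=> x y hx hy; rewrite ge_max hx hy.
Qed.

End Num.

Section Myerson.
Context {R : realType}.
Local Open Scope ring_scope.

Lemma myerson (s : R) (m : nat) (X Pp : nat -> R) :
  0 <= s -> s <= 1 ->
  (forall k, (k < m)%N -> Pp k.+1 - lv s k * X k.+1 <= Pp k - lv s k * X k) ->
  lv s m * X m <= Pp m -> X 0%N <= 1 ->
  \sum_(k < m.+1) fv s m k * X k - fv s m 0 <= \sum_(k < m.+1) fv s m k * Pp k.
Proof.
move=> s0 s1 htr hir hX0.
pose U k := Pp k - lv s k * X k.
pose G k := s ^+ (m - k).
pose rho := s ^+ m * (1 - s).
have hf : forall k : 'I_m.+1, fv s m k = G k - (if (k : nat) is k'.+1 then G k' else 0).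
  case=> [[|k] hk] /=; rewrite /G ?subr0 ?subn0 //.
  have -> : (m - k = (m - k.+1).+1)%N by rewrite subnSK.
  by rewrite exprS; lra.
have e1 : \sum_(k < m.+1) fv s m k * Pp k =
   \sum_(k < m.+1) (G k - (if (k : nat) is k'.+1 then G k' else 0)) * U k
   + \sum_(k < m.+1) fv s m k * lv s k * X k.
  rewrite -big_split /=; apply: eq_bigr => k _; rewrite -hf /U; lra.
rewrite e1 (abel G U m).
have e2 : \sum_(k < m) rho * X k.+1 <= \sum_(k < m) G k * (U k - U k.+1).
  apply: ler_sum => k _.
  have hk := htr k (ltn_ord k).
  have -> : rho = G k * (lv s k.+1 - lv s k).
    rewrite /rho /G /lv exprS.
    have -> : s ^+ m = s ^+ (m - k) * s ^+ k by rewrite -exprD subnK // ltnW.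
    lra.
  rewrite -mulrA; apply: ler_wpM2l; first by rewrite /G exprn_ge0.
  rewrite /U; lra.
have e3 : 0 <= G m * U m by rewrite /G subnn expr0 mul1r /U; lra.
have e4 : \sum_(k < m.+1) fv s m k * lv s k * X k =
          \sum_(k < m) fv s m k.+1 * lv s k.+1 * X k.+1.
  by rewrite big_ord_recl /= /lv expr0 subrr mulr0 mul0r add0r.
have e5 : \sum_(k < m.+1) fv s m k * X k - fv s m 0 <=
          \sum_(k < m) fv s m k.+1 * X k.+1.
  rewrite big_ord_recl /=.
  have : 0 <= s ^+ m by rewrite exprn_ge0.
  move=> h; have : s ^+ m * X 0%N <= s ^+ m by rewrite -[X in _ <= X]mulr1 ler_wpM2l.
  lra.
have e6 : \sum_(k < m) fv s m k.+1 * X k.+1 =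
          \sum_(k < m) rho * X k.+1 + \sum_(k < m) fv s m k.+1 * lv s k.+1 * X k.+1.
  rewrite -big_split /=; apply: eq_bigr => k _.
  rewrite /fv /rho /lv.
  have -> : s ^+ m = s ^+ (m - k.+1) * s ^+ k.+1 by rewrite -exprD subnK.
  lra.
rewrite e4; lra.
Qed.

End Myerson.

Section Prod.
Context {R : realType} {L : finType} (f : L -> R) (n : nat).
Hypothesis hf1 : \sum_k f k = 1.

Definition wt (p : {ffun 'I_n -> L}) := \prod_i f (p i).
Definition setf (p : {ffun 'I_n -> L}) (i : 'I_n) (k : L) : {ffun 'I_n -> L} :=
  [ffun j => if j == i then k else p j].

Lemma setfK p i k : setf (setf p i k) i (p i) = p.
Proof. by apply/ffunP => j; rewrite !ffunE; case: eqP => // ->. Qed.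

Lemma setf_i p i k : setf p i k i = k.
Proof. by rewrite ffunE eqxx. Qed.

Lemma resample (F : {ffun 'I_n -> L} -> R) i :
  \sum_p wt p * F p = \sum_p wt p * \sum_k f k * F (setf p i k).
Proof.
pose W p := \prod_(j | j != i) f (p j).
have hw : forall p, wt p = f (p i) * W p by move=> p; rewrite /wt (bigD1 i).
have hW : forall p k, W (setf p i k) = W p.
  move=> p k; apply: eq_bigr => j /negbTE hj; by rewrite ffunE hj.
pose g (q : {ffun 'I_n -> L} * L) := f (q.1 i) * W q.1 * f q.2 * F (setf q.1 i q.2).
have -> : \sum_p wt p * \sum_k f k * F (setf p i k) = \sum_q g q.
  rewrite (eq_bigr (fun q => g (q.1, q.2))); last by case.
  rewrite -(pair_bigA _ (fun p k => g (p, k))) /=; apply: eq_bigr => p _.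
  rewrite mulr_sumr; apply: eq_bigr => k _; rewrite /g /= hw; lra.
pose h (q : {ffun 'I_n -> L} * L) := (setf q.1 i q.2, q.1 i).
have hinj : injective h.
  move=> [p1 k1] [p2 k2] /= [] e1 e2.
  have := congr1 (fun p => setf p i (p1 i)) e1.
  rewrite /= setfK e2 setfK => ep; subst p2.
  by rewrite -(setf_i p1 i k1) e1 setf_i.
rewrite (reindex_inj hinj) /=.
rewrite (eq_bigr (fun q => g (h (q.1, q.2)))); last by case.
rewrite -(pair_bigA _ (fun p k => g (h (p, k)))) /=.
apply: eq_bigr => p _.
rewrite /g /h /= -[X in X = _]mulr1 -hf1 mulr_sumr; apply: eq_bigr => k _.
rewrite setf_i hW setfK hw; lra.
Qed.

Lemma wt_sum : \sum_p wt p = 1.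
Proof.
rewrite /wt -(bigA_distr_bigA (fun _ k => f k)) /=.
by rewrite big1 // => i _; exact: hf1.
Qed.


Lemma E1 (g : L -> R) i : \sum_p wt p * g (p i) = \sum_k f k * g k.
Proof.
rewrite (resample (fun p => g (p i)) i).
under eq_bigr do under eq_bigr do rewrite setf_i.
by rewrite -mulr_suml wt_sum mul1r.
Qed.

Lemma E2 (g h : L -> R) i j : i != j ->
  \sum_p wt p * (g (p i) * h (p j)) = (\sum_k f k * g k) * (\sum_k f k * h k).
Proof.
move=> ij; rewrite (resample (fun p => g (p i) * h (p j)) i).
have e : forall p k, setf p i k j = p j by move=> p k; rewrite ffunE eq_sym (negbTE ij).
under eq_bigr do under eq_bigr do rewrite setf_i e mulrA.
under eq_bigr do rewrite -mulr_suml mulrCA.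
by rewrite -mulr_sumr E1.
Qed.

Lemma var_bound (g : L -> R) : (forall k, 0 <= f k) ->
  \sum_k f k * g k = 0 -> (forall k, g k ^+ 2 <= 1) ->
  \sum_p wt p * (\sum_i g (p i)) ^+ 2 <= n%:R.
Proof.
move=> f0 g0 g1.
have -> : \sum_p wt p * (\sum_i g (p i)) ^+ 2 =
   \sum_i \sum_j \sum_p wt p * (g (p i) * g (p j)).
  symmetry; under eq_bigr do rewrite exchange_big /=.
  rewrite exchange_big /=; apply: eq_bigr => p _.
  rewrite expr2 mulr_suml mulr_sumr; apply: eq_bigr => i _.
  rewrite mulr_sumr mulr_sumr; apply: eq_bigr => j _; lra.
have -> : n%:R = \sum_(i < n) (1 : R) by rewrite sumr_const card_ord.
apply: ler_sum => i _.
have -> : \sum_j \sum_p wt p * (g (p i) * g (p j)) = \sum_p wt p * (g (p i) * g (p i)).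
  rewrite (bigD1 i) //= [X in _ + X]big1 ?addr0 //.
  by move=> j ji; rewrite E2 ?g0 ?mul0r // eq_sym.
under eq_bigr do rewrite -expr2.
rewrite (E1 (fun k => g k ^+ 2)).
rewrite -hf1; apply: ler_sum => k _.
by rewrite -[X in _ <= X]mulr1 ler_wpM2l.
Qed.

End Prod.

Section MeasPart.
Context (R : realType) (d : measure_display) (Omega : measurableType d)
  (P : probability Omega R) (M : mechanism R Omega).
Hypothesis wf : well_formed M.
Hypothesis bf : BF_in_expectation P M.

Local Open Scope ereal_scope.

Lemma int_bounded (f : Omega -> R) (K : R) : measurable_fun setT f ->
  (forall w, 0 <= f w <= K)%R -> P.-integrable setT (EFin \o f).
Proof.
move=> mf hf; apply/integrableP; split; first exact/measurable_realfun.measurable_EFinP.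
rewrite (eq_integral (EFin \o f)); last first.
  move=> w _ /=; have /andP[h1 h2] := hf w.
  by rewrite ger0_norm.
apply: (@le_lt_trans _ _ (\int[P]_(x in setT) (cst K%:E) x)).
  apply: ge0_le_integral => //.
  - by move=> w _ /=; have /andP[h1 h2] := hf w; rewrite lee_fin.
  - exact/measurable_realfun.measurable_EFinP.
  - by move=> w _ /=; have /andP[h1 h2] := hf w; rewrite lee_fin.
have hP : P setT = 1 := probability_setT P.
rewrite integral_cst // -[X in (_ * X)%E]/(P setT) hP.
by rewrite mule1 ltry.
Qed.

Lemma pay_sum_le n B u c : valid_instance B u -> nonneg_costs c ->
  \sum_(i < n) expect P (fun w => pay M B u c w i) <= B%:E.
Proof.
move=> vi nc; have := bf _ _ _ _ vi nc; rewrite /expect.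
under eq_integral do rewrite -sumEFin.
rewrite ge0_integral_sum //.
- by move=> i; apply/measurable_realfun.measurable_EFinP; have [_ [mp _]] := wf _ _ _ _ vi nc i.
- by move=> i w _; have [_ [_ h]] := wf _ _ _ _ vi nc i; rewrite lee_fin; case: (h w).
Qed.


Lemma int_ge0_le (f : Omega -> R) (K : R) : measurable_fun setT f ->
  (forall w, 0 <= f w)%R -> expect P f <= K%:E ->
  P.-integrable setT (EFin \o f).
Proof.
move=> mf hf hK; apply/integrableP; split; first exact/measurable_realfun.measurable_EFinP.
rewrite (eq_integral (EFin \o f)); last by move=> w _ /=; rewrite ger0_norm.
by apply: le_lt_trans hK _; rewrite ltry.
Qed.

Definition Xv n B u c (i : 'I_n) := fine (expect P (fun w => alloc M B u c w i)).
Definition Pv n B u c (i : 'I_n) := fine (expect P (fun w => pay M B u c w i)).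
Arguments Xv {n}. Arguments Pv {n}.

Section Inst.
Variables (n : nat) (B : R) (u c : 'I_n -> R).
Hypotheses (vi : valid_instance B u) (nc : nonneg_costs c).

Lemma intX i : P.-integrable setT (EFin \o (fun w => alloc M B u c w i)).
Proof.
have [mx [_ h]] := wf _ _ _ _ vi nc i.
by apply: (@int_bounded _ 1) => // w; have [/andP[h1 h2] _] := h w; rewrite h1 h2.
Qed.

Lemma payi_le i : expect P (fun w => pay M B u c w i) <= B%:E.
Proof.
apply: (le_trans _ (pay_sum_le _ _ _ _ vi nc)).
rewrite (bigD1 i) //= leeDl // sume_ge0 // => j _.
apply: integral_ge0 => w _; have [_ [_ h]] := wf _ _ _ _ vi nc j.
by rewrite lee_fin; case: (h w).
Qed.

Lemma intP i : P.-integrable setT (EFin \o (fun w => pay M B u c w i)).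
Proof.
have [_ [mp h]] := wf _ _ _ _ vi nc i.
by apply: (@int_ge0_le _ B) => //; [move=> w; case: (h w) | exact: payi_le].
Qed.

Lemma expX i : expect P (fun w => alloc M B u c w i) = (Xv B u c i)%:E
  /\ (0 <= Xv B u c i <= 1)%R.
Proof.
have fin := integrable_fin_num measurableT (intX i).
have E : expect P (fun w => alloc M B u c w i) = (Xv B u c i)%:E.
  by rewrite /Xv fineK.
split => //; have [mx [_ h]] := wf _ _ _ _ vi nc i.
rewrite -!lee_fin -E; apply/andP; split.
  by apply: integral_ge0 => w _; rewrite lee_fin; have [/andP[]] := h w.
apply: (@le_trans _ _ (\int[P]_(x in setT) (cst 1%:E) x)).
  apply: ge0_le_integral => //.
  - by move=> w _; rewrite lee_fin; have [/andP[]] := h w.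
  - exact/measurable_realfun.measurable_EFinP.
  - by move=> w _; rewrite lee_fin; have [/andP[]] := h w.
have hP : P setT = 1 := probability_setT P.
by rewrite integral_cst // -[X in (_ * X)%E]/(P setT) hP mule1.
Qed.

Lemma expP i : expect P (fun w => pay M B u c w i) = (Pv B u c i)%:E
  /\ (0 <= Pv B u c i)%R.
Proof.
have fin := integrable_fin_num measurableT (intP i).
have E : expect P (fun w => pay M B u c w i) = (Pv B u c i)%:E.
  by rewrite /Pv fineK.
split => //; have [_ [_ h]] := wf _ _ _ _ vi nc i.
rewrite -lee_fin -E.
by apply: integral_ge0 => w _; rewrite lee_fin; case: (h w).
Qed.

Lemma sumPv : (\sum_(i < n) Pv B u c i <= B)%R.
Proof.
rewrite -lee_fin -sumEFin; apply: (le_trans _ (pay_sum_le _ _ _ _ vi nc)).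
by rewrite le_eqVlt; apply/orP; left; apply/eqP; apply: eq_bigr => i _; rewrite (proj1 (expP i)).
Qed.

Lemma exp_lin i (k : R) : expect P (fun w => (pay M B u c w i - k * alloc M B u c w i)%R)
  = (Pv B u c i - k * Xv B u c i)%:E.
Proof.
rewrite /expect.
under eq_integral do rewrite EFinB.
rewrite integralB_EFin //; [|exact: intP|].
- rewrite -/(expect P _) (proj1 (expP i)).
  under eq_integral do rewrite EFinM.
  rewrite integralZl //; [|exact: intX].
  by rewrite -/(expect P _) (proj1 (expX i)) -EFinM -EFinB.
- have -> : (EFin \o (fun x => k * alloc M B u c x i)%R) = (fun x => k%:E * (EFin \o (fun w => alloc M B u c w i)) x).
    by apply/funext => x /=; rewrite EFinM.
  exact/integrableZl/intX.
Qed.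

Lemma exp_util : expected_utility P M B u c = (\sum_(i < n) u i * Xv B u c i)%R%:E.
Proof.
rewrite /expected_utility /expect.
under eq_integral do rewrite -sumEFin.
rewrite integral_sum //; last first.
  move=> i; have -> : (fun x => (u i * alloc M B u c x i)%:E) = (fun x => (u i)%:E * (EFin \o (fun w => alloc M B u c w i)) x).
    by apply/funext => x /=; rewrite EFinM.
  exact/integrableZl/intX.
rewrite -sumEFin; apply: eq_bigr => i _.
under eq_integral do rewrite EFinM.
rewrite integralZl //; last exact: intX.
by rewrite -/(expect P _) (proj1 (expX i)) -EFinM.
Qed.

End Inst.


Lemma truth_real (tr : truthful_in_expectation P M) n B u c
  (vi : valid_instance B u) (nc : nonneg_costs c) (i : 'I_n) b : (0 <= b)%R ->
  (Pv B u (upd c i b) i - c i * Xv B u (upd c i b) i <= Pv B u c i - c i * Xv B u c i)%R.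
Proof.
move=> b0; have := tr _ _ _ _ vi nc i b b0.
have nc' : nonneg_costs (upd c i b).
  by move=> j; rewrite /upd; case: ifP => _ //; exact: nc.
by rewrite (exp_lin _ _ _ _ vi nc) (exp_lin _ _ _ _ vi nc') lee_fin.
Qed.

Lemma ir_real (ir : IR_in_expectation P M) n B u c
  (vi : valid_instance B u) (nc : nonneg_costs c) (i : 'I_n) :
  (c i * Xv B u c i <= Pv B u c i)%R.
Proof.
have := ir _ _ _ _ vi nc i.
by rewrite (proj1 (expX _ _ _ _ vi nc i)) (proj1 (expP _ _ _ _ vi nc i)) -EFinM lee_fin.
Qed.

End MeasPart.
Arguments expX {R d Omega P M} wf {n B u c} vi nc i.
Arguments expP {R d Omega P M} wf bf {n B u c} vi nc i.
Arguments exp_util {R d Omega P M} wf {n B u c} vi nc.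
Arguments truth_real {R d Omega P M} wf bf tr {n B u c} vi nc i {b} _.
Arguments ir_real {R d Omega P M} wf bf ir {n B u c} vi nc i.
Arguments sumPv {R d Omega P M} wf bf {n B u c} vi nc.

Section Core.
Context (R : realType) (d : measure_display) (Omega : measurableType d)
  (P : probability Omega R) (M : mechanism R Omega).
Hypotheses (wf : well_formed M) (ir : IR_in_expectation P M)
  (tr : truthful_in_expectation P M) (bf : BF_in_expectation P M).

Lemma core (m n : nat) (s eta alpha : R) :
  0 <= s <= 1 -> 0 < eta -> 0 <= alpha -> (0 < n)%N ->
  let mu := \sum_(k < m.+1) fv s m k * lv s k in
  let B := n%:R * (mu + eta) in
  (forall p : {ffun 'I_n -> 'I_m.+1},
     ((alpha * Ustar (fun _ => 1%R) (fun i => lv s (p i)) B)%:E <=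
       expected_utility P M B (fun _ => 1%R) (fun i => lv s (p i)))%E) ->
  alpha * n%:R - alpha / (4 * eta ^+ 2) <= n%:R * (fv s m 0 + mu + eta).
Proof.
move=> s01 eta0 al0 n0 mu B H.
have [s0 s1] : 0 <= s /\ s <= 1 by case/andP: s01.
pose f := fun k : 'I_m.+1 => fv s m k.
have hf1 : \sum_k f k = 1 by rewrite /f fv_sum.
have f0 : forall k, 0 <= f k by move=> k; exact: fv_ge0.
have mu0 : 0 <= mu by apply: sumr_ge0 => k _; apply: mulr_ge0; [exact: fv_ge0 | case/andP: (lv_01 s k s01)].
have mu1 : mu <= 1.
  rewrite -(fv_sum s m) /mu; apply: ler_sum => k _.
  by rewrite -[X in _ <= X]mulr1; apply: ler_wpM2l; [exact: fv_ge0 | case/andP: (lv_01 s k s01)].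
have nR0 : (0 : R) < n%:R by rewrite ltr0n.
have B0 : 0 < B by rewrite /B mulr_gt0 //; lra.
have BnE : n%:R * eta <= B by rewrite /B; apply: ler_wpM2l; [exact: ltW | lra].
pose u : 'I_n -> R := fun _ => 1.
pose cost (p : {ffun 'I_n -> 'I_m.+1}) : 'I_n -> R := fun i => lv s (p i).
have vi : valid_instance B u by split => // i; rewrite /u ltr01.
have nc : forall p, nonneg_costs (cost p) by move=> p i; case/andP: (lv_01 s (p i) s01).
pose Xp p i := Xv R d Omega P M n B u (cost p) i.
pose Pp p i := Pv R d Omega P M n B u (cost p) i.
have H1 : forall p, alpha * Ustar u (cost p) B <= \sum_i Xp p i.
  move=> p; have := H p; rewrite (exp_util wf vi (nc p)) lee_fin.
  by under eq_bigr do rewrite /u mul1r.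
pose x (p : {ffun 'I_n -> 'I_m.+1}) : R := \sum_(i < n) (lv s (p i) - mu).
have H2 : forall p, n%:R - x p ^+ 2 / (4 * eta * B) <= Ustar u (cost p) B.
  move=> p.
  have := @ustar_lb R n (cost p) B (x p ^+ 2 / (4 * (n%:R * eta))) B0.
  have d0 : 0 < 4 * (n%:R * eta) by rewrite mulr_gt0 // ?mulr_gt0 //.
  have -> : n%:R * (x p ^+ 2 / (4 * (n%:R * eta))) / B = x p ^+ 2 / (4 * eta * B).
    by field; rewrite !gt_eqF //; lra.
  apply.
  - by rewrite divr_ge0 ?sqr_ge0 // ltW.
  - have ex : x p = \sum_i cost p i - n%:R * mu.
      by rewrite /x big_split /= sumrN sumr_const card_ord mulr_natl.
    have -> : \sum_i cost p i - B = x p - n%:R * eta.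
      rewrite ex /B mulrDr; lra.
    rewrite ler_pdivlMr //.
    have := sqr_ge0 (x p - 2 * (n%:R * eta)); rewrite sqrrB; nra.
have H3 : alpha * n%:R - alpha / (4 * eta ^+ 2) <= \sum_p wt f n p * (alpha * Ustar u (cost p) B).
  have wt0 : forall p, 0 <= wt f n p by move=> p; apply: prodr_ge0 => i _; exact: f0.
  have V := @var_bound R _ f n hf1 (fun k => lv s k - mu) f0.
  have V' : \sum_p wt f n p * x p ^+ 2 <= n%:R.
    apply: V.
    - by rewrite /f; under eq_bigr do rewrite mulrBr; rewrite sumrB -mulr_suml hf1 mul1r /mu subrr.
    - move=> k; have := lv_01 s k s01; move=> /andP[l0 l1].
      rewrite expr2; nra.
  pose K := 4 * eta * B.
  have K0 : 0 < K by rewrite /K; apply: mulr_gt0 => //; apply: mulr_gt0 => //; lra.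
  have e : \sum_p wt f n p * (alpha * (n%:R - x p ^+ 2 / K)) =
     alpha * n%:R * \sum_p wt f n p - alpha / K * \sum_p wt f n p * x p ^+ 2.
    rewrite !mulr_sumr -sumrB; apply: eq_bigr => p _.
    by rewrite mulrBr mulrBr mulrA; field; rewrite gt_eqF.
  apply: (le_trans _ (ler_sum _ (fun p _ => ler_wpM2l (wt0 p) (ler_wpM2l al0 (H2 p))))).
  rewrite -/K e (wt_sum _ _ hf1) mulr1 lerD2l lerN2.
  apply: (le_trans (ler_wpM2l _ V')); first by rewrite divr_ge0 // ltW.
  have -> : alpha / K * n%:R = alpha / (4 * eta ^+ 2) * (n%:R * eta / B).
    by rewrite /K; field; rewrite !gt_eqF.
  rewrite -[X in _ <= X]mulr1; apply: ler_wpM2l.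
    by rewrite divr_ge0 // mulr_ge0 // sqr_ge0.
  by rewrite ler_pdivrMr // mul1r.
pose f00 := fv s m 0.
have H4i : forall i, \sum_p wt f n p * Xp p i <= \sum_p wt f n p * Pp p i + f00.
  move=> i.
  rewrite (resample _ _ hf1 (fun p => Xp p i) i) (resample _ _ hf1 (fun p => Pp p i) i).
  have -> : \sum_p wt f n p * \sum_k f k * Pp (setf n p i k) i + f00 =
            \sum_p wt f n p * (\sum_k f k * Pp (setf n p i k) i + f00).
    by rewrite [in RHS](eq_bigr (fun p => wt f n p * \sum_k f k * Pp (setf n p i k) i + wt f n p * f00));
      [rewrite big_split /= -mulr_suml (wt_sum _ _ hf1) mul1r | move=> p _; rewrite mulrDr].
  apply: ler_sum => p _; apply: ler_wpM2l; first by apply: prodr_ge0 => j _; exact: f0.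
  pose Xk k := Xp (setf n p i (inord k)) i.
  pose Pk k := Pp (setf n p i (inord k)) i.
  have eX : \sum_k f k * Xp (setf n p i k) i = \sum_(k < m.+1) fv s m k * Xk k.
    by apply: eq_bigr => k _; rewrite /Xk inord_val.
  have eP : \sum_k f k * Pp (setf n p i k) i = \sum_(k < m.+1) fv s m k * Pk k.
    by apply: eq_bigr => k _; rewrite /Pk inord_val.
  have ec : forall k, (k <= m)%N -> cost (setf n p i (inord k)) i = lv s k.
    by move=> k km; rewrite /cost ffunE eqxx inordK.
  rewrite eX eP.
  have hX0 : Xk 0%N <= 1.
    by have [_ /andP[]] := expX (P:=P) wf vi (nc (setf n p i (inord 0))) i.
  have hir : lv s m * Xk m <= Pk m.
    by have := ir_real wf bf ir vi (nc (setf n p i (inord m))) i; rewrite ec.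
  have htr : forall k, (k < m)%N -> Pk k.+1 - lv s k * Xk k.+1 <= Pk k - lv s k * Xk k.
    move=> k km.
    have e2 : upd (cost (setf n p i (inord k))) i (lv s k.+1) = cost (setf n p i (inord k.+1)).
      apply/funext => j; rewrite /upd /cost !ffunE; case: eqP => // _.
      by rewrite inordK.
    have := truth_real wf bf tr vi (nc (setf n p i (inord k))) i
      (proj1 (andP (lv_01 s k.+1 s01))).
    by rewrite e2 ec // ltnW.
  have := myerson s m Xk Pk s0 s1 htr hir hX0; rewrite /f00; lra.
have H4 : \sum_p wt f n p * \sum_i Xp p i <= B + n%:R * f00.
  have -> : \sum_p wt f n p * \sum_i Xp p i = \sum_i \sum_p wt f n p * Xp p i.
    by rewrite exchange_big /=; apply: eq_bigr => p _; rewrite mulr_sumr.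
  apply: (le_trans (ler_sum _ (fun i _ => H4i i))).
  rewrite big_split /= sumr_const card_ord -[f00 *+ n]mulr_natl lerD2r.
  have -> : \sum_i \sum_p wt f n p * Pp p i = \sum_p wt f n p * \sum_i Pp p i.
    by rewrite exchange_big /=; apply: eq_bigr => p _; rewrite mulr_sumr.
  apply: (le_trans (y := \sum_p wt f n p * B)).
    apply: ler_sum => p _; apply: ler_wpM2l; first by apply: prodr_ge0 => j _; exact: f0.
    exact: (sumPv wf bf vi (nc p)).
  by rewrite -mulr_suml (wt_sum _ _ hf1) mul1r.
have H5 : \sum_p wt f n p * (alpha * Ustar u (cost p) B) <= \sum_p wt f n p * \sum_i Xp p i.
  apply: ler_sum => p _; apply: ler_wpM2l; first by apply: prodr_ge0 => j _; exact: f0.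
  exact: H1.
have := le_trans H3 (le_trans H5 H4).
rewrite /B /f00; lra.
Qed.
End Core.

Theorem corollary1 (R : realType) (d : measure_display)
  (Omega : measurableType d) (P : probability Omega R)
  (M : mechanism R Omega) (alpha theta0 : R) :
  well_formed M -> IR_in_expectation P M ->
  truthful_in_expectation P M -> BF_in_expectation P M ->
  1 - (expR 1)^-1 < alpha -> 0 < theta0 ->
  ~ (forall (n : nat) (B : R) (u c : 'I_n -> R),
       valid_instance B u -> nonneg_costs c -> cmax c / B <= theta0 ->
       ((alpha * Ustar u c B)%:E <= expected_utility P M B u c)%E).
Proof.
move=> wf ir tr bf hal hth H.
have e1 : 1 < expR (1 : R) by rewrite expR_gt1 ltr01.
have ei1 : (expR (1 : R))^-1 < 1 by rewrite invf_lt1 // (lt_trans ltr01).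
have ei0 : 0 < (expR (1 : R))^-1 by rewrite invr_gt0 expR_gt0.
pose g := alpha - (1 - (expR 1)^-1).
have g0 : 0 < g by rewrite /g; lra.
have al0 : 0 < alpha by lra.
have [m [m0 hm]] : exists m : nat, (0 < m)%N /\ 3 / g < m%:R.
  by exists (Num.trunc (3 / g)).+1; split => //; exact: truncnS_gt.
have m1 : (m.+1%:R : R)^-1 < g / 3.
  have mp : (0 : R) < m.+1%:R by rewrite ltr0n.
  have h3 : 3 < m.+1%:R * g.
    rewrite -ltr_pdivrMr //; apply: (lt_le_trans hm); rewrite ler_nat; exact: leqnSn.
  rewrite -div1r ltr_pdivrMr //; nra.
pose s := 1 - (m.+1%:R : R)^-1.
have mp : (0 : R) < m.+1%:R by rewrite ltr0n.
have s01 : 0 <= s <= 1.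
  rewrite /s; have : (m.+1%:R : R)^-1 <= 1 by rewrite invf_le1 // ler1n.
  have : 0 <= (m.+1%:R : R)^-1 by rewrite invr_ge0 ltW.
  move: ((m.+1%:R : R)^-1) => w h1 h2; apply/andP; split; lra.
pose eta := g / 3.
have eta0 : 0 < eta by rewrite /eta; lra.
pose mu := \sum_(k < m.+1) fv s m k * lv s k.
have hmu : fv s m 0 + mu <= 1 - (expR 1)^-1 + eta.
  rewrite /mu fv_mu /=.
  have hs := @spow_lb R m m0; rewrite -/s in hs.
  have sm1 : s ^+ m <= 1 by apply: exprn_ile1; case/andP: s01.
  have sw : 1 - s = (m.+1%:R : R)^-1 by rewrite /s opprB addrC subrK.
  have Nw : (m.+1%:R : R) * (m.+1%:R)^-1 = 1 by rewrite mulfV // gt_eqF.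
  have w0 : 0 <= (m.+1%:R : R)^-1 by rewrite invr_ge0 ltW.
  have mN : (m%:R : R) = m.+1%:R - 1 by rewrite -natr1 addrK.
  rewrite sw mN; rewrite /eta.
  move: hs sm1 Nw w0 m1; rewrite -/g.
  move: (s ^+ m) (m.+1%:R : R) ((m.+1%:R : R)^-1) => S N w.
  move=> h1 h2 h3 h4 h5; nra.
pose T1 := 1 / (eta * theta0).
pose T2 := alpha / (4 * eta ^+ 2) / eta.
have T10 : 0 <= T1 by rewrite /T1 divr_ge0 // ltW // mulr_gt0.
have T20 : 0 <= T2 by rewrite /T2 !divr_ge0 ?ltW // mulr_gt0 // ?exprn_gt0 //; lra.
have [n [n0 hn]] : exists n : nat, (0 < n)%N /\ T1 + T2 < n%:R.
  by exists (Num.trunc (T1 + T2)).+1; split => //; exact: truncnS_gt.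
pose B := n%:R * (mu + eta).
have := @core R d Omega P M wf ir tr bf m n s eta alpha s01 eta0 (ltW al0) n0.
rewrite -/mu -/B.
have mu0 : 0 <= mu.
  by apply: sumr_ge0 => k _; apply: mulr_ge0; [exact: fv_ge0 | case/andP: (lv_01 s k s01)].
have nR0 : (0 : R) < n%:R by rewrite ltr0n.
have B0 : 0 < B by rewrite /B mulr_gt0 //; lra.
have BnE : n%:R * eta <= B by rewrite /B; apply: ler_wpM2l; [exact: ltW | lra].
have Hp : forall p : {ffun 'I_n -> 'I_m.+1},
     ((alpha * Ustar (fun _ => 1%R) (fun i => lv s (p i)) B)%:E <=
       expected_utility P M B (fun _ => 1%R) (fun i => lv s (p i)))%E.
  move=> p; apply: H.
  - by split => // i; exact: ltr01.
  - by move=> i; case/andP: (lv_01 s (p i) s01).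
  - have c1 : cmax (fun i => lv s (p i)) <= 1.
      by apply: cmax_le1 => i; case/andP: (lv_01 s (p i) s01).
    apply: (le_trans (y := 1 / B)).
      by rewrite ler_pM2r ?invr_gt0.
    rewrite ler_pdivrMr // mulrC.
    have : T1 <= n%:R by lra.
    rewrite /T1 ler_pdivrMr ?mulr_gt0 //.
    move=> h; apply: (le_trans h); rewrite /B.
    have := mulr_ge0 (mulr_ge0 (ltW nR0) mu0) (ltW hth).
    move: (n%:R : R) => N hh; nra.
move=> /(_ Hp) hc.
have : T2 < n%:R by lra.
rewrite /T2 ltr_pdivrMr //.
have E : n%:R * (fv s m 0 + mu + eta) <= n%:R * (alpha - eta).
  by apply: ler_wpM2l; [exact: ltW | rewrite /eta /g in hmu *; lra].
lra.
Qed.
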